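(* Let $\bm{\Pi}=\{\Pi_{\bm{x}}\}_{\bm{x}\in\{0,1\}^n}$ be a POVM on $(\mathbb{C}^2)^{\otimes n}$. Let $|\Phi_0\rangle=|+\rangle^{\otimes n}$ with $|+\rangle=(|0\rangle+|1\rangle)/\sqrt2$, $W=\frac{1}{2^n}\mathbb{1}-|\Phi_0\rangle\langle\Phi_0|$, and $\mathscr{Q}^{\theta=0}_\Phi(\bm{\Pi})=\frac{1}{2^n}\sum_{\bm{x}}2^n|\operatorname{tr}[W\Pi_{\bm{x}}]|$. Let $\mathcal{C}_{\ell_\infty}(\bm{\Pi})=\sum_{\bm{x}}\sum_{\bm{y}<\bm{z}}|\Pi_{\bm{x}}(\bm{y},\bm{z})|$. Then $$\mathcal{C}_{\ell_\infty}(\bm{\Pi})\ge 2^{n-1}\,\mathscr{Q}^{\theta=0}_\Phi(\bm{\Pi}).$$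
   Context: $\Pi(\bm{y},\bm{z})=\langle\bm{y}|\Pi|\bm{z}\rangle$ in the computational basis $\{|\bm{y}\rangle:\bm{y}\in\{0,1\}^n\}$; the sum over $\bm{y}<\bm{z}$ runs over pairs of distinct bit strings with respect to a fixed total order (each unordered pair once). *)

(* Defs.v *)
(* Complex scalars: an arbitrary numClosedFieldType C
   (e.g. algC, or complex R over a real closed field). *)
From HB Require Import structures.
From mathcomp Require Import all_boot all_order all_algebra.
Set Implicit Arguments. Unset Strict Implicit. Unset Printing Implicit Defensive.
Import Order.TTheory GRing.Theory Num.Theory.
Local Open Scope ring_scope.

Section Defs.
Variable C : numClosedFieldType.
Variable n : nat.

(* Computational basis of (C^2)^{⊗n} indexed by 'I_(2^n): the bit string y
   corresponds to the ordinal whose binary expansion is y. *)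
Notation N := (2 ^ n)%N.

Definition hermitian (A : 'M[C]_N) : Prop :=
  forall i j, A j i = (A i j)^*.

Definition psd (A : 'M[C]_N) : Prop :=
  hermitian A /\
  forall v : 'cV[C]_N, 0 <= \sum_(i < N) \sum_(j < N) (v i 0)^* * A i j * v j 0.

Definition povm (P : 'I_N -> 'M[C]_N) : Prop :=
  (forall x, psd (P x)) /\ \sum_(x < N) P x = 1%:M.

(* |Phi0><Phi0| with |Phi0> = |+>^{⊗n}: every entry equals 1/2^n *)
Definition Phi0proj : 'M[C]_N := \matrix_(i, j) (N%:R)^-1.

Definition Wmx : 'M[C]_N := (N%:R)^-1 *: 1%:M - Phi0proj.

Definition Qtheta0 (P : 'I_N -> 'M[C]_N) : C :=
  (N%:R)^-1 * \sum_(x < N) (N%:R * `| \tr (Wmx *m P x) |).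

Definition Clinf (P : 'I_N -> 'M[C]_N) : C :=
  \sum_(x < N) \sum_(y < N) \sum_(z < N | (y < z)%N) `| P x y z |.

End Defs.

(* Main.v *)
Require Import Defs.
From mathcomp Require Import all_boot all_order all_algebra.
Import Order.TTheory GRing.Theory Num.Theory.
Local Open Scope ring_scope.

Lemma tr_key (C : numClosedFieldType) (n : nat) (A : 'M[C]_(2 ^ n)) :
  @Defs.hermitian C n A ->
  (2 ^ n)%:R * `| \tr (@Wmx C n *m A) | <=
  2 * \sum_(y < 2 ^ n) \sum_(z < 2 ^ n | (y < z)%N) `| A y z |.
Proof.
move=> hA.
have N0 : (2 ^ n)%:R != 0 :> C by rewrite pnatr_eq0 expn_eq0.
have diag : forall i, (@Wmx C n *m A) i i =
    ((2 ^ n)%:R)^-1 * (A i i - \sum_(k < 2 ^ n) A k i).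
  move=> i; rewrite !mxE.
  under eq_bigr do rewrite !mxE mulrBl.
  rewrite sumrB mulrBr mulr_sumr (bigD1 i) //= eqxx mulr1n big1 ?addr0  ?mulr1 //.
  move=> j /negbTE; rewrite eq_sym => ->; by rewrite mulr0n mulr0 mul0r.
have tr : \tr (@Wmx C n *m A) = ((2 ^ n)%:R)^-1 *
    - \sum_(i < 2 ^ n) \sum_(k < 2 ^ n | k != i) A k i.
  rewrite /mxtrace; under eq_bigr do rewrite diag.
  rewrite -mulr_sumr -sumrN; congr (_ * _); apply: eq_bigr => i _.
  by rewrite (bigD1 i) //= opprD addrA subrr add0r.
rewrite tr normrM mulrA normfV normr_nat mulfV // mul1r normrN.
apply: le_trans (ler_norm_sum _ _ _) _.
apply: le_trans (ler_sum _ (fun i _ => ler_norm_sum _ _ _)) _.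
set S := \sum_(y < 2 ^ n) \sum_(z < 2 ^ n | (y < z)%N) `| A y z |.
have split : forall i : 'I_(2 ^ n), \sum_(k < 2 ^ n | k != i) `|A k i| =
   \sum_(k < 2 ^ n | (k < i)%N) `|A k i| + \sum_(k < 2 ^ n | (i < k)%N) `|A i k|.
  move=> i; rewrite (bigID (fun k : 'I_(2 ^ n) => (k < i)%N)) /=; congr (_ + _).
    apply: eq_bigl => k; rewrite andb_idl // => h.
    by rewrite -(inj_eq val_inj) /= neq_ltn h.
  apply: eq_big => k.
    by rewrite -(inj_eq val_inj) /= -leqNgt [(i < k)%N]ltn_neqAle eq_sym.
  by move=> _; rewrite hA norm_conjC.
rewrite (eq_bigr _ (fun i _ => split i)) big_split /= mulr_natl mulr2n.
rewrite lerD2r le_eqVlt; apply/orP; left; apply/eqP.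
rewrite /S; under eq_bigr do rewrite big_mkcond /=.
under [RHS]eq_bigr do rewrite big_mkcond /=.
by rewrite exchange_big.
Qed.

Theorem lemma4 (C : numClosedFieldType) (n : nat)
  (P : 'I_(2 ^ n) -> 'M[C]_(2 ^ n)) :
  povm P ->
  ((2 ^ n)%:R / 2) * Qtheta0 P <= Clinf P.
Proof.
move=> [hpsd _].
have N0 : (2 ^ n)%:R != 0 :> C by rewrite pnatr_eq0 expn_eq0.
have twoN0 : (2 : C) != 0 by rewrite pnatr_eq0.
rewrite /Qtheta0 /Clinf mulrAC mulrA mulfV // mul1r.
rewrite mulrC ler_pdivrMl ?ltr0n // mulr_sumr.
apply: ler_sum => x _.
exact: tr_key (hpsd x).1.
Qed.
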